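(* For $n\ge 4$, the dom-stability of the cycle $C_n$ is $St_{dom}(C_n)=3$ if $n\equiv 0\pmod 4$, $St_{dom}(C_n)=2$ if $n\equiv 3\pmod 4$, and $St_{dom}(C_n)=1$ otherwise.
   Context: A dominated coloring of a graph is a proper coloring in which every color class is dominated by at least one vertex, i.e. for each color class $C$ there is a vertex adjacent to every vertex of $C$; $\chi_{dom}(G)$ is the minimum number of colors in a dominated coloring. The dom-stability $St_{dom}(G)$ is the minimum number of vertices of $G$ whose removal changes the dominated chromatic number of $G$. *)

(* Defs.v *)
From mathcomp Require Import all_boot.
Set Implicit Arguments. Unset Strict Implicit. Unset Printing Implicit Defensive.

(* A simple graph is a symmetric irreflexive relation [e] on a finType [T].
   We work with induced subgraphs G[A] for A : {set T}. *)

(* [f] is a dominated coloring of the induced subgraph G[A] using colors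
   [0, k): proper, and every (nonempty) color class C is dominated by a
   vertex x of G[A], i.e. every vertex of C is adjacent to x.
   Convention: a vertex also dominates itself, so an isolated
   vertex forming its own class is dominated (by itself).  Since color classes
   are independent, this only matters for isolated vertices. *)
Definition dominated_coloring (T : finType) (e : rel T) (A : {set T})
    (k : nat) (f : T -> nat) : Prop :=
  [/\ (forall x, x \in A -> f x < k),
      (forall x y, x \in A -> y \in A -> e x y -> f x <> f y) &
      (forall c, (exists2 y, y \in A & f y = c) ->
         exists2 x, x \in A &
           forall y, y \in A -> f y = c -> y = x \/ e x y)].

Definition is_chi_dom (T : finType) (e : rel T) (A : {set T}) (k : nat) : Prop :=
  (exists f, dominated_coloring e A k f) /\
  (forall k' f, dominated_coloring e A k' f -> k <= k').

Definition same_chi_dom (T : finType) (e : rel T) (S : {set T}) : Prop :=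
  forall k, is_chi_dom e (~: S) k <-> is_chi_dom e [set: T] k.

Definition is_St_dom (T : finType) (e : rel T) (s : nat) : Prop :=
  (exists S : {set T}, #|S| = s /\ ~ same_chi_dom e S) /\
  (forall S : {set T}, ~ same_chi_dom e S -> s <= #|S|).

Definition cycle_rel (n : nat) : rel 'I_n :=
  fun i j => (val j == (val i).+1 %% n) || (val i == (val j).+1 %% n).
Arguments cycle_rel n : clear implicits.

(* Main.v *)
Require Import Defs.
From mathcomp Require Import all_boot zmodp zify.
Set Implicit Arguments. Unset Strict Implicit.

Lemma dc_auto (T : finType) (e : rel T) (s t : T -> T) A k f :
  cancel s t -> cancel t s -> (forall x y, e (s x) (s y) = e x y) ->
  dominated_coloring e A k f ->
  dominated_coloring e [set x | s x \in A] k (fun x => f (s x)).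
Proof.
move=> st ts he [hb hp hd]; split.
- by move=> x; rewrite inE; apply: hb.
- by move=> x y; rewrite !inE => hx hy hxy; apply: hp => //; rewrite he.
- move=> c [y]; rewrite inE => hy hfy.
  have [x hx hxd] := hd c (ex_intro2 _ _ (s y) hy hfy).
  exists (t x); first by rewrite inE ts.
  move=> y'; rewrite inE => hy' hfy'.
  case: (hxd _ hy' hfy') => [h|h].
  + by left; rewrite -h st.
  + by right; rewrite -he ts.
Qed.

Lemma chi_auto (T : finType) (e : rel T) (s t : T -> T) A k :
  cancel s t -> cancel t s -> (forall x y, e (s x) (s y) = e x y) ->
  is_chi_dom e A k -> is_chi_dom e [set x | s x \in A] k.
Proof.
move=> st ts he [[f hf] hmin]; split.
- by exists (fun x => f (s x)); apply: dc_auto.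
- move=> k' g hg.
  have he' : forall x y, e (t x) (t y) = e x y by move=> x y; rewrite -he !ts.
  have := dc_auto ts st he' hg.
  have -> : [set x | t x \in [set x0 | s x0 \in A]] = A.
    by apply/setP => x; rewrite !inE ts.
  exact: hmin.
Qed.

Lemma chi_auto_iff (T : finType) (e : rel T) (s t : T -> T) A k :
  cancel s t -> cancel t s -> (forall x y, e (s x) (s y) = e x y) ->
  is_chi_dom e A k <-> is_chi_dom e [set x | s x \in A] k.
Proof.
move=> st ts he; split; first exact: chi_auto.
have he' : forall x y, e (t x) (t y) = e x y by move=> x y; rewrite -he !ts.
move=> h; have := chi_auto ts st he' h.
have -> : [set x | t x \in [set x0 | s x0 \in A]] = A.
  by apply/setP => x; rewrite !inE ts.
done.
Qed.

Lemma same_of_chi (T : finType) (e : rel T) A B K :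
  is_chi_dom e A K -> is_chi_dom e B K ->
  forall k, is_chi_dom e A k <-> is_chi_dom e B k.
Proof.
have H : forall A B k, is_chi_dom e A K -> is_chi_dom e B K -> is_chi_dom e A k -> is_chi_dom e B k.
  move=> A' B' k [[f hf] h1] hB [[g hg] h2].
  have e1 : k = K by apply/eqP; rewrite eqn_leq (h2 _ _ hf) (h1 _ _ hg).
  by rewrite e1.
move=> hA hB k; split; apply: H => //.
Qed.

Lemma two_colors (T : finType) (e : rel T) (A : {set T}) k f :
  1 < #|A| -> dominated_coloring e A k f -> 2 <= k.
Proof.
move=> /card_gt1P [a [b [ha hb hab]]] [hk hp hd].
have hka := hk _ ha; have hkb := hk _ hb.
case: (eqVneq (f a) (f b)) => hf; last first.
  by move: hf hka hkb => /eqP; lia.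
have [x hx hxd] := hd (f a) (ex_intro2 _ _ a ha erefl).
have hkx := hk _ hx.
case: (hxd _ ha erefl) => [ea|ea].
  case: (hxd _ hb (esym hf)) => [eb|eb]; first by move: hab; rewrite ea eb eqxx.
  by have := hp _ _ ha hb; rewrite {1}ea => /(_ eb).
case: (hxd _ hb (esym hf)) => [eb|eb].
  by have := hp _ _ hb ha; rewrite {1}eb => /(_ ea); rewrite hf.
have := hp _ _ hx ha ea; lia.
Qed.

Definition g m := 2 * (m %/ 4) + minn (m %% 4) 2.
Definition pat i := 2 * (i %/ 4) + i %% 2.

Lemma crelP N (x y : 'I_N) : cycle_rel N x y <->
  (nat_of_ord y = x + 1 \/ nat_of_ord x = y + 1 \/ (nat_of_ord x = N - 1 /\ nat_of_ord y = 0)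
   \/ (nat_of_ord y = N - 1 /\ nat_of_ord x = 0)).
Proof.
rewrite /cycle_rel; change (\val x) with (nat_of_ord x); change (\val y) with (nat_of_ord y).
have hx := ltn_ord x; have hy := ltn_ord y.
have ex : (nat_of_ord x).+1 %% N = if (nat_of_ord x).+1 < N then (nat_of_ord x).+1 else 0.
  case: (ltnP (nat_of_ord x).+1 N) => h; first by rewrite modn_small.
  have e : (nat_of_ord x).+1 = N by lia.
  by rewrite e modnn.
have ey : (nat_of_ord y).+1 %% N = if (nat_of_ord y).+1 < N then (nat_of_ord y).+1 else 0.
  case: (ltnP (nat_of_ord y).+1 N) => h; first by rewrite modn_small.
  have e : (nat_of_ord y).+1 = N by lia.
  by rewrite e modnn.
rewrite ex ey; split.
- by case/orP => /eqP; case: ifP => h; lia.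
- move=> H; apply/orP; case: ifP => h1; case: ifP => h2; lia.
Qed.

Definition dc2 (T : finType) (e : rel T) (A : {set T}) lo hi (f : T -> nat) :=
  [/\ (forall x, x \in A -> lo <= f x < hi),
      (forall x y, x \in A -> y \in A -> e x y -> f x <> f y) &
      (forall c, (exists2 y, y \in A & f y = c) ->
         exists2 x, x \in A &
           forall y, y \in A -> f y = c -> y = x \/ e x y)].

Lemma dc2_dc (T : finType) (e : rel T) (A : {set T}) k f :
  dc2 e A 0 k f -> dominated_coloring e A k f.
Proof. by case=> h1 h2 h3; split => // x /h1. Qed.

Lemma dc2_union (T : finType) (e : rel T) (A A1 A2 : {set T}) lo1 hi1 lo2 hi2 f :
  (forall x, (x \in A) = (x \in A1) || (x \in A2)) ->
  dc2 e A1 lo1 hi1 f -> dc2 e A2 lo2 hi2 f -> lo1 <= hi1 -> hi1 <= lo2 -> lo2 <= hi2 ->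
  (forall x y, x \in A1 -> y \in A2 -> ~~ e x y /\ ~~ e y x) ->
  dc2 e A lo1 hi2 f.
Proof.
move=> hA [b1 p1 d1] [b2 p2 d2] l1 l2 l3 hne; split.
- move=> x; rewrite hA => /orP [h|h]; [have := b1 _ h | have := b2 _ h]; lia.
- move=> x y; rewrite !hA => /orP [hx|hx] /orP [hy|hy].
  + exact: p1.
  + by have [/negP ? _] := hne _ _ hx hy.
  + by have [_ /negP ?] := hne _ _ hy hx.
  + exact: p2.
- move=> c [y]; rewrite hA => /orP [hy|hy] hfy.
  + have [x hx hxd] := d1 c (ex_intro2 _ _ y hy hfy).
    exists x; first by rewrite hA hx.
    move=> y'; rewrite hA => /orP [hy'|hy'] hf'; first exact: hxd.
    have := b1 _ hy; have := b2 _ hy'; lia.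
  + have [x hx hxd] := d2 c (ex_intro2 _ _ y hy hfy).
    exists x; first by rewrite hA hx orbT.
    move=> y'; rewrite hA => /orP [hy'|hy'] hf'; last exact: hxd.
    have := b1 _ hy'; have := b2 _ hy; lia.
Qed.

Lemma seg_dc N s len c0 (A : {set 'I_N}) f :
  4 <= N -> s + len <= N -> (forall x, (x \in A) = (s <= x < s + len)) ->
  (forall x, x \in A -> f x = c0 + pat (x - s)) ->
  dc2 (cycle_rel N) A c0 (c0 + g len) f.
Proof.
move=> hN hsl hA hf; split.
- move=> x hx; rewrite hf //; move: hx; rewrite hA /pat /g; lia.
- move=> x y hx hy /crelP hxy; rewrite !hf //.
  have := ltn_ord x; have := ltn_ord y.
  move: hx hy; rewrite !hA /pat; lia.
- move=> c [y hy <-].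
  have hyN := ltn_ord y.
  have hy' := hy; rewrite hA in hy'.
  set i := nat_of_ord y - s.
  set j0 := 4 * (i %/ 4) + i %% 2.
  case: (ltnP (j0 + 2) len) => hj.
  + have hxN : s + j0 + 1 < N by rewrite /j0 /i; lia.
    exists (Ordinal hxN); first by rewrite hA /= /j0 /i; lia.
    move=> z hz; rewrite !hf // => hfz; right; apply/crelP => /=.
    have := ltn_ord z.
    move: hz hfz; rewrite hA /pat /j0 /i; lia.
  + have hxN : s + j0 < N by rewrite /j0 /i; lia.
    exists (Ordinal hxN); first by rewrite hA /= /j0 /i; lia.
    move=> z hz; rewrite !hf // => hfz; left; apply: ord_inj => /=.
    have := ltn_ord z.
    move: hz hfz; rewrite hA /pat /j0 /i; lia.
Qed.

Definition sh m (r : nat) (z : 'I_m.+1) : 'I_m.+1 := inZp (z + r).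

Lemma shv m r (z : 'I_m.+1) : nat_of_ord (sh r z) = (z + r) %% m.+1.
Proof. by []. Qed.

Lemma shE m r (z : 'I_m.+1) : r <= m.+1 ->
  nat_of_ord (sh r z) = if z + r < m.+1 then z + r else z + r - m.+1.
Proof.
move=> hr; rewrite shv; have hz := ltn_ord z.
case: ltnP => h; first by rewrite modn_small.
have -> : z + r = (z + r - m.+1) + m.+1 by lia.
rewrite modnDr modn_small; lia.
Qed.

Lemma sh_comp m a b (z : 'I_m.+1) : sh a (sh b z) = sh (b + a) z.
Proof. by apply: ord_inj; rewrite !shv modnDml addnA. Qed.

Lemma sh2E m (z : 'I_m.+1) : sh 2 z = sh 1 (sh 1 z).
Proof. by rewrite sh_comp. Qed.

Lemma sh_can m c : c <= m.+1 -> cancel (@sh m c) (@sh m (m.+1 - c)).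
Proof.
move=> hc z; apply: ord_inj; rewrite sh_comp shv.
have -> : z + (c + (m.+1 - c)) = z + m.+1 by lia.
by rewrite modnDr modn_small.
Qed.

Lemma sh_rel m c (x y : 'I_m.+1) : cycle_rel m.+1 (sh c x) (sh c y) = cycle_rel m.+1 x y.
Proof.
rewrite /cycle_rel.
have H : forall a b : 'I_m.+1,
    (\val (sh c b) == (\val (sh c a)).+1 %% m.+1) = (\val b == (\val a).+1 %% m.+1).
  move=> a b; change (\val (sh c b)) with (nat_of_ord (sh c b)).
  change (\val (sh c a)) with (nat_of_ord (sh c a)).
  change (\val b) with (nat_of_ord b); change (\val a) with (nat_of_ord a).
  rewrite !shv -[((a + c) %% m.+1).+1]addn1 modnDml -addnA [c + 1]addnC addnA eqn_modDr.
  by rewrite addn1 (modn_small (ltn_ord b)).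
by rewrite !H.
Qed.

Lemma nbr m (x y : 'I_m.+1) : cycle_rel m.+1 x y -> y = sh 1 x \/ x = sh 1 y.
Proof.
rewrite /cycle_rel => /orP [] /eqP h; [left|right]; apply: ord_inj;
  rewrite shv addn1 -h //.
Qed.

Lemma sh1_inj m (u v : 'I_m.+1) : sh 1 u = sh 1 v -> u = v.
Proof. have hc : 1 <= m.+1 by []. exact: (can_inj (sh_can hc)). Qed.

Definition Rset m (A : {set 'I_m.+1}) (f : 'I_m.+1 -> nat) :=
  [set z | [&& z \in A, sh 1 z \in A, sh 2 z \in A & f z == f (sh 2 z)]].

Lemma dom_adj (T : finType) (e : rel T) (A : {set T}) k f a b x c :
  dominated_coloring e A k f -> a \in A -> b \in A -> a != b -> f a = c -> f b = c ->
  (forall y, y \in A -> f y = c -> y = x \/ e x y) -> e x a.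
Proof.
move=> [hk hp hd] ha hb hab hfa hfb hx.
case: (hx _ ha hfa) => // ea.
case: (hx _ hb hfb) => eb; first by move: hab; rewrite ea eb eqxx.
by have := hp _ _ ha hb; rewrite {1}ea => /(_ eb); rewrite hfa hfb.
Qed.

Lemma LB m (A : {set 'I_m.+1}) k f :
  dominated_coloring (cycle_rel m.+1) A k f -> #|A| <= k + #|Rset A f|.
Proof.
move=> hdc; have [hk hp hd] := hdc.
set R := Rset A f.
set B := A :\: (sh 2 @: R).
have inj : {in B &, injective f}.
  move=> y1 y2; rewrite !inE => /andP [n1 h1] /andP [n2 h2] hf.
  case: (eqVneq y1 y2) => // hne.
  have [x hx hxd] := hd (f y1) (ex_intro2 _ _ y1 h1 erefl).
  have ex1 := dom_adj hdc h1 h2 hne erefl (esym hf) hxd.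
  have hne' : y2 != y1 by rewrite eq_sym.
  have ex2 := dom_adj hdc h2 h1 hne' (esym hf) erefl hxd.
  case: (nbr ex1) => e1; case: (nbr ex2) => e2.
  + by rewrite e1 e2.
  + have : y2 \in R.
      rewrite inE h2 -e2 hx /= sh2E -e2 -e1 h1 /= hf eqxx.
      by [].
    move=> /(imset_f (sh 2)); rewrite sh2E -e2 -e1 => hh. by rewrite hh in n1.
  + have : y1 \in R.
      rewrite inE h1 -e1 hx /= sh2E -e1 -e2 h2 /= hf eqxx.
      by [].
    move=> /(imset_f (sh 2)); rewrite sh2E -e1 -e2 => hh. by rewrite hh in n2.
  + by apply: sh1_inj; rewrite -e1 -e2.
have hB : #|B| <= k.
  rewrite cardE.
  have U : uniq (map f (enum B)).
    rewrite map_inj_in_uniq ?enum_uniq // => x y; rewrite !mem_enum; exact: inj.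
  have := uniq_leq_size U (s2 := iota 0 k); rewrite size_map size_iota; apply.
  move=> c /mapP [x]; rewrite mem_enum mem_iota inE => /andP [_ hx] ->.
  by rewrite add0n hk.
have hsub : A \subset B :|: sh 2 @: R.
  by apply/subsetP => x hx; rewrite !inE hx andbT orNb.
have := subset_leq_card hsub; rewrite cardsU.
have := leq_imset_card (sh 2) R.
move=> h1 h2; apply: (leq_trans h2); apply: (leq_trans (leq_subr _ _)); exact: leq_add hB h1.
Qed.

Lemma R_nodist m (A : {set 'I_m.+1}) k f : 4 <= m ->
  dominated_coloring (cycle_rel m.+1) A k f ->
  forall z, z \in Rset A f -> sh 2 z \notin Rset A f.
Proof.
move=> hm hdc z hz; apply/negP => hz2.
move: hz hz2; rewrite !inE => /and4P [ha _ hb /eqP fab] /and4P [_ _ hc /eqP fbc].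
have hzN := ltn_ord z.
have h2 : 2 <= m.+1 by lia.
have v2 := @shE m 2 z h2.
have v4 : nat_of_ord (sh 2 (sh 2 z)) = if z + 4 < m.+1 then z + 4 else z + 4 - m.+1.
  by rewrite sh_comp shE //; lia.
have dab : z != sh 2 z.
  by apply/negP => /eqP /(congr1 (@nat_of_ord _)); rewrite v2; case: ifP; lia.
have dac : z != sh 2 (sh 2 z).
  by apply/negP => /eqP /(congr1 (@nat_of_ord _)); rewrite v4; case: ifP; lia.
have dbc : sh 2 z != sh 2 (sh 2 z).
  by apply/negP => /eqP /(congr1 (@nat_of_ord _)); rewrite v4 v2; do 2 case: ifP; lia.
have [hk hp hd] := hdc.
have [x hx hxd] := hd (f z) (ex_intro2 _ _ z ha erefl).
have ea := dom_adj hdc ha hb dab erefl (esym fab) hxd.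
have dba : sh 2 z != z by rewrite eq_sym.
have dca : sh 2 (sh 2 z) != z by rewrite eq_sym.
have eb := dom_adj hdc hb ha dba (esym fab) erefl hxd.
have ec := dom_adj hdc hc ha dca (esym (etrans fab fbc)) erefl hxd.
clear dba dca.
move/eqP: dab => dab; move/eqP: dac => dac; move/eqP: dbc => dbc.
case: (nbr ea) => e1; case: (nbr eb) => e2; case: (nbr ec) => e3;
  first [ congruence
        | apply: dab; apply: sh1_inj; congruence
        | apply: dac; apply: sh1_inj; congruence
        | apply: dbc; apply: sh1_inj; congruence ].
Qed.

Lemma four (a b c d : bool) : (a -> ~~ c) -> (b -> ~~ d) -> a + (b + (c + (d + 0))) <= 2.
Proof. by case: a; case: b; case: c; case: d; move=> H1 H2 //=; try move: (H1 isT); try move: (H2 isT). Qed.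

Lemma block_q q : forall L s (pr : pred nat), L < 4 * q.+1 ->
  (forall i, s <= i -> i.+2 < s + L -> pr i -> ~~ pr i.+2) ->
  count pr (iota s L) <= g L.
Proof.
elim: q => [|q IH] L s pr hL h.
- case: L hL h => [|[|[|[|L]]]] // _ h /=.
  + by case: (pr s).
  + by case: (pr s); case: (pr s.+1).
  + have -> : g 3 = 2 by [].
    have := h s (leqnn _); rewrite addn3 => /(_ (ltnSn _)).
    by case: (pr s); case: (pr s.+1); case: (pr s.+2) => // /(_ isT).
- case: (ltnP L (4 * q.+1)) => hL'; first exact: IH.
  have -> : iota s L = iota s 4 ++ iota (s + 4) (L - 4).
    by rewrite -iotaD subnKC //; lia.
  rewrite count_cat.
  have h1 : count pr (iota s 4) <= 2.
    have := h s (leqnn _); have := h s.+1 (leqnSn _).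
    have -> : s.+3 < s + L by lia.
    have -> : s.+2 < s + L by lia.
    rewrite /= => /(_ isT) h1 /(_ isT) h0.
    exact: four.
  have h2 : count pr (iota (s + 4) (L - 4)) <= g (L - 4).
    apply: IH; first lia.
    move=> i hi hi2; apply: h; lia.
  have : g (L - 4) + 2 = g L by rewrite /g; lia.
  lia.
Qed.

Lemma block (pr : pred nat) s L :
  (forall i, s <= i -> i.+2 < s + L -> pr i -> ~~ pr i.+2) ->
  count pr (iota s L) <= g L.
Proof. by apply: (@block_q L); lia. Qed.

Lemma count_split (pr : pred nat) a b L : a <= b -> b <= L ->
  (forall i, a <= i < b -> ~~ pr i) ->
  count pr (iota 0 L) = count pr (iota 0 a) + count pr (iota b (L - b)).
Proof.
move=> hab hbL h.
have e1 : L = a + ((b - a) + (L - b)) by lia.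
rewrite {1}e1 !iotaD (subnKC hab) !count_cat add0n.
have -> : count pr (iota a (b - a)) = 0.
  rewrite (@eq_in_count _ pr pred0) ?count_pred0 //.
  by move=> i; rewrite mem_iota (subnKC hab) => /h /negbTE.
by rewrite add0n.
Qed.

Lemma bridge m (P : {set 'I_m.+1}) : #|P| = count (fun i => inZp i \in P) (iota 0 m.+1).
Proof.
rewrite -val_enum_ord count_map cardE /enum_mem size_filter.
rewrite /enum_mem filter_predT.
apply: eq_count => x /=. by rewrite valZpK.
Qed.

Lemma inZp2 m i : inZp i.+2 = sh 2 (inZp i : 'I_m.+1).
Proof. by apply: ord_inj; rewrite shv /= modnDml addn2. Qed.

Lemma nodist_pr m (P : {set 'I_m.+1}) :
  (forall z, z \in P -> sh 2 z \notin P) ->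
  forall i, (inZp i : 'I_m.+1) \in P -> ~~ ((inZp i.+2 : 'I_m.+1) \in P).
Proof. by move=> h i /h; rewrite inZp2. Qed.

Lemma sh_can' m c : c <= m.+1 -> cancel (@sh m (m.+1 - c)) (@sh m c).
Proof. by move=> hc; have := sh_can (leq_subr c m.+1); rewrite subKn. Qed.

Lemma sh1v m (z : 'I_m.+1) : nat_of_ord (sh 1 z) = if z + 1 < m.+1 then z + 1 else z + 1 - m.+1.
Proof. exact: shE. Qed.

Lemma sh2v m (z : 'I_m.+1) : 1 <= m -> nat_of_ord (sh 2 z) = if z + 2 < m.+1 then z + 2 else z + 2 - m.+1.
Proof. by move=> h; apply: shE. Qed.

Lemma count_R m (P : {set 'I_m.+1}) L : L <= m.+1 ->
  (forall z, z \in P -> sh 2 z \notin P) ->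
  (forall z : 'I_m.+1, z \in P -> z < L) -> #|P| <= g L.
Proof.
move=> hL hnd hsup.
rewrite bridge (@count_split _ L m.+1 m.+1) // ?subnn /= ?addn0.
- apply: block => i _ _; exact: nodist_pr.
- move=> i /andP [h1 h2]; apply/negP => /hsup; rewrite /= modn_small //; lia.
Qed.

Lemma pat_coloring m len (A : {set 'I_m.+1}) : 3 <= m -> len <= m.+1 ->
  (forall x : 'I_m.+1, (x \in A) = (x < len)) ->
  dominated_coloring (cycle_rel m.+1) A (g len) (fun x => pat x).
Proof.
move=> hm hl hA; apply: dc2_dc.
apply: (@seg_dc m.+1 0 len 0 A) => //.
by move=> x _; rewrite subn0.
Qed.

Lemma chi_full m : 3 <= m -> is_chi_dom (cycle_rel m.+1) setT (g m.+1).
Proof.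
move=> hm; split.
  exists (fun x : 'I_m.+1 => pat x); apply: pat_coloring => //.
  by move=> x; rewrite in_setT ltn_ord.
move=> k f hdc.
case: (ltngtP m 3) => hm3; first lia; last first.
  subst m; apply: two_colors hdc; by rewrite cardsT card_ord.
have hNk := LB hdc; rewrite cardsT card_ord in hNk.
set R := Rset setT f.
have nd := R_nodist hm3 hdc.
case: (set_0Vmem R) => [R0|[w hw]].
  move: hNk; rewrite -/R R0 cards0 /g; lia.
have [z0 [h0 h1]] : exists z0, z0 \notin R /\ sh 1 z0 \notin R.
  case: (boolP [exists z, (z \notin R) && (sh 1 z \notin R)]).
    by move=> /existsP [z /andP [? ?]]; exists z.
  move=> /existsPn hno.
  have w2 := nd _ hw.
  have w1 : sh 1 w \in R.
    by move: (hno (sh 1 w)); rewrite -sh2E (negbTE w2) /= andbT negbK.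
  have w3 := nd _ w1.
  move: (hno (sh 2 w)); rewrite w2 /= sh_comp.
  by move: w3; rewrite sh_comp /= => ->.
set N := m.+1.
set c := (z0 + 2) %% N.
have hc : c <= N by rewrite /c ltnW // ltn_mod.
have hdc' := dc_auto (sh_can hc) (sh_can' hc) (@sh_rel m c) hdc.
have eT : [set x | sh c x \in [set: 'I_m.+1]] = setT by apply/setP => x; rewrite !inE.
rewrite eT in hdc'.
have hN2 := LB hdc'; rewrite cardsT card_ord in hN2.
have nd' := R_nodist hm3 hdc'.
have : #|Rset setT (fun x => f (sh c x))| <= g (N - 2).
  apply: count_R => //; first lia.
  move=> z; rewrite inE => /and4P [_ _ _ /eqP hz].
  rewrite ltnNge; apply/negP => hz2.
  have hzN := ltn_ord z.
  have : sh c z \in R.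
    rewrite inE !in_setT /=.
    by rewrite hz !sh_comp addnC eqxx.
  case: (ltngtP z (N - 2)) => hzz; first lia.
  - have -> : sh c z = sh 1 z0.
      apply: ord_inj; rewrite !shv /c modnDmr.
      have -> : z + (z0 + 2) = (z0 + 1) + N by rewrite /N; lia.
      by rewrite modnDr.
    by move: h1 => /negP.
  - have -> : sh c z = z0.
      apply: ord_inj; rewrite !shv /c modnDmr.
      have -> : z + (z0 + 2) = z0 + N by rewrite /N; lia.
      by rewrite modnDr modn_small.
    by move: h0 => /negP.
move=> hR; have := leq_trans hN2 (leq_add (leqnn k) hR); rewrite /N /g; lia.
Qed.

Lemma chi_rm1 m (A : {set 'I_m.+1}) : 3 <= m ->
  (m.+1 %% 4 == 0) || (m.+1 %% 4 == 3) ->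
  (forall x : 'I_m.+1, (x \in A) = (x < m)) -> #|A| = m ->
  is_chi_dom (cycle_rel m.+1) A (g m.+1).
Proof.
move=> hm hres hA hcard; split.
  exists (fun x : 'I_m.+1 => pat x).
  have -> : g m.+1 = g m by move: hres; rewrite /g; lia.
  exact: pat_coloring.
move=> k f hdc.
case: (ltngtP m 3) => hm3; first lia; last first.
  subst m; apply: two_colors hdc; by rewrite hcard.
have hNk := LB hdc; rewrite hcard in hNk.
have : #|Rset A f| <= g (m - 2).
  apply: count_R; first lia.
    exact: R_nodist hdc.
  move=> z; rewrite inE hA => /and4P [h0 h1 h2 _].
  move: h0 h1 h2; rewrite !hA sh1v sh2v; last lia. do 2 case: ifP; lia.
move=> hR; have := leq_trans hNk (leq_add (leqnn k) hR).
move: hres; rewrite /g; lia.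
Qed.

Lemma chi_rm2 m u (A : {set 'I_m.+1}) : 3 <= m -> m.+1 %% 4 == 0 -> u < m ->
  (forall x : 'I_m.+1, (x \in A) = (x < m) && (nat_of_ord x != u)) -> #|A| = m.-1 ->
  is_chi_dom (cycle_rel m.+1) A (g m.+1).
Proof.
move=> hm hres hu hA hcard; split.
  exists (fun x : 'I_m.+1 => if x < u then pat x else g u + pat (x - u.+1)).
  have -> : g m.+1 = 0 + (g u + g (m - u.+1)) by move: hres; rewrite /g; lia.
  apply: dc2_dc.
  apply: (@dc2_union _ _ A [set x : 'I_m.+1 | x < u] [set x : 'I_m.+1 | u < x < m]
           0 (0 + g u) (g u) (g u + g (m - u.+1))) => //.
  - by move=> x; rewrite hA !inE; lia.
  - apply: (@seg_dc m.+1 0 u 0) => //; try lia.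
      by move=> x; rewrite inE add0n.
    by move=> x; rewrite inE => ->; rewrite subn0.
  - apply: (@seg_dc m.+1 u.+1 (m - u.+1) (g u)) => //; try lia.
      by move=> x; rewrite inE; lia.
    by move=> x; rewrite inE => /andP [h _]; rewrite ltnNge ltnW.
  - lia.
  - move=> x y; rewrite !inE => hx hy.
    have := ltn_ord x; have := ltn_ord y.
    split; apply/negP => /crelP; lia.
move=> k f hdc.
case: (ltngtP m 3) => hm3; first lia; last first.
  subst m; apply: two_colors hdc; by rewrite hcard.
have hNk := LB hdc; rewrite hcard in hNk.
have : #|Rset A f| <= g (u - 2) + g (m - 2 - minn u.+1 (m - 2)).
  have hnd := R_nodist hm3 hdc.
  have hsup : forall z : 'I_m.+1, z \in Rset A f ->
      (z < m - 2) && ((z < u - 2) || (u < z)).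
    move=> z; rewrite inE hA => /and4P [h0 h1 h2 _].
    move: h0 h1 h2; rewrite !hA sh1v sh2v; last lia. do 2 case: ifP; lia.
  rewrite bridge (@count_split _ (m - 2) m.+1 m.+1) //; try lia; last first.
    move=> i /andP [hi1 hi2]; apply/negP => /hsup; rewrite /= modn_small //; lia.
  rewrite subnn /= addn0.
  rewrite (@count_split _ (u - 2) (minn u.+1 (m - 2)) (m - 2)); try lia; last first.
    move=> i /andP [hi1 hi2]; apply/negP => /hsup; rewrite /= modn_small //; lia.
  apply: leq_add; apply: block => i _ _; exact: nodist_pr.
move=> hR; have := leq_trans hNk (leq_add (leqnn k) hR).
move: hres; rewrite /g; lia.
Qed.

Lemma card_tail m s : s <= m.+1 -> #|[set x : 'I_m.+1 | m.+1 - s <= x]| = s.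
Proof.
move=> hs; rewrite bridge (@count_split _ 0 (m.+1 - s) m.+1) //; try lia.
  rewrite /= (@eq_in_count _ _ predT) ?count_predT ?size_iota; first lia.
  move=> i; rewrite mem_iota => /andP [h1 h2]; rewrite inE /= modn_small //; lia.
move=> i /andP [h1 h2]; rewrite inE /= modn_small //; lia.
Qed.

Lemma cardC_ord m (S : {set 'I_m.+1}) : #|~: S| = m.+1 - #|S|.
Proof. by rewrite cardsCs setCK card_ord. Qed.

Unset Implicit Arguments.

Theorem mainTheorem9 (n : nat) : 4 <= n ->
  is_St_dom (cycle_rel n)
    (if n %% 4 == 0 then 3 else if n %% 4 == 3 then 2 else 1).
Proof.
case: n => [|m] // hn.
have hm : 3 <= m by lia.
have hfull := chi_full hm.
set s := (if _ then _ else _).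
have hs : (s == 3) && (m.+1 %% 4 == 0) || (s == 2) && (m.+1 %% 4 == 3)
          || (s == 1) && (m.+1 %% 4 != 0) && (m.+1 %% 4 != 3).
  by rewrite /s; case: ifP => h1; [|case: ifP => h2]; rewrite ?h1 ?h2 ?eqxx //= ?andbT.
split.
- exists [set x : 'I_m.+1 | m.+1 - s <= x]; split.
    apply: card_tail; move: hs; lia.
  move=> H; have [_ hmin] := (H (g m.+1)).2 hfull.
  have hdc : dominated_coloring (cycle_rel m.+1) (~: [set x : 'I_m.+1 | m.+1 - s <= x])
               (g (m.+1 - s)) (fun x : 'I_m.+1 => pat x).
    apply: pat_coloring => //; first lia.
    by move=> x; rewrite !inE ltnNge.
  have := hmin _ _ hdc; move: hs; rewrite /g; lia.
- move=> S hS; rewrite leqNgt; apply/negP => hlt; apply: hS.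
  case: (set_0Vmem S) => [->|[v hv]].
    by rewrite /same_chi_dom setC0.
  have hc : v.+1 <= m.+1 := ltn_ord v.
  set S' := [set x | sh v.+1 x \in S].
  have hmax : (ord_max : 'I_m.+1) \in S'.
    rewrite inE (_ : sh v.+1 ord_max = v) //.
    apply: ord_inj; rewrite shv /=.
    have -> : m + v.+1 = v + m.+1 by lia.
    by rewrite modnDr modn_small.
  have hcard : #|S'| = #|S|.
    exact: (card_preimset _ (can_inj (sh_can hc))).
  have eC : [set x | sh v.+1 x \in ~: S] = ~: S'.
    by apply/setP => x; rewrite !inE.
  suff hS' : is_chi_dom (cycle_rel m.+1) (~: S') (g m.+1).
    move=> k; rewrite (chi_auto_iff (~: S) k (sh_can hc) (sh_can' hc) (@sh_rel m v.+1)) eC.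
    exact: (same_of_chi hS' hfull k).
  have hS1 : 0 < #|S| by apply/card_gt0P; exists v.
  case: (eqVneq #|S'| 1) => h1.
  + have [x ex] : exists x, S' = [set x] by apply/cards1P; rewrite h1.
    have hx : x = ord_max by move: hmax; rewrite ex inE => /eqP.
    apply: chi_rm1 => //.
    * move: hs hlt hcard h1; lia.
    * move=> y; rewrite ex hx !inE; have hy : nat_of_ord y < m.+1 := ltn_ord y.
      apply/idP/idP => h.
      - by rewrite ltn_neqAle -ltnS hy andbT; apply: contra h => /eqP e; apply/eqP/ord_inj.
      - by apply/negP => /eqP e; move: h; rewrite e /= ltnn.
    * by rewrite cardsCs setCK card_ord h1 subn1.
  + have h2 : #|S'| == 2 by move: hs hlt hcard h1 hS1 => /=; lia.
    have [x [y [hxy ex]]] : exists x y, x != y /\ S' = [set x; y] by apply/cards2P.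
    have hres : m.+1 %% 4 == 0 by move: hs hlt hcard h2; lia.
    have [u [hu eu]] : exists u : 'I_m.+1, u != ord_max /\ S' = [set u; ord_max].
      move: hmax; rewrite ex !inE => /orP [/eqP e|/eqP e]; subst.
      * by exists y; split; [rewrite eq_sym | rewrite setUC].
      * by exists x.
    apply: (@chi_rm2 m (nat_of_ord u)) => //.
    * have hu' : nat_of_ord u != m by apply: contra hu => /eqP e; apply/eqP/ord_inj.
      by have := ltn_ord u; move: hu'; lia.
    * move=> z; rewrite eu !inE.
      have E1 : (z == u) = (nat_of_ord z == nat_of_ord u) by [].
      have E2 : (z == ord_max) = (nat_of_ord z == m) by [].
      rewrite E1 E2; have := ltn_ord z; have := ltn_ord u.
      case: (nat_of_ord z == nat_of_ord u) / eqP; case: (nat_of_ord z == m) / eqP => /=; lia.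
    * rewrite cardC_ord; move/eqP: h2 => ->; lia.
Qed.
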